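(* Let $\lambda$ be any one of the four functions $\mu,\mu^*,\nu,\nu^*$. Then for all positive integers $n_1,n_2,m$ (with additionally $n_1,n_2\ge m$ when $\lambda=\mu^*$ or $\lambda=\nu^*$), $$\lambda(n_1+n_2,m)\le \lambda(n_1,m)+\lambda(n_2,m).$$
   Context: Let $\mathbb F_2=\{0,1\}$ be the field with two elements. For $u\in\mathbb F_2^n$, $|u|$ denotes the Hamming weight of $u$. A wiring on $n$ vertices is a matrix $W=(w_{i,j})\in M(n,n;\mathbb F_2)$ with $w_{i,i}=1$ for all $i$. The degree of vertex $j$ is the number of $1$s in the $j$th column of $W$, and $\deg(W)$ is the maximum degree over all vertices. For $c\in\mathbb F_2^n$, $M(W,c)=\max\{|Wx+c| : x\in\mathbb F_2^n\}$. For $n,m\ge1$, $A(n,m)$ is the set of wirings on $n$ vertices with $\deg(W)\le m$; for $n\ge m$, $A^*(n,m)$ is the set of wirings on $n$ vertices in which every vertex has degree exactly $m$. Define $\mu(n,m)=\min\{M(W,0): W\in A(n,m)\}$, $\nu(n,m)=\min\{M(W,c): W\in A(n,m),\ c\in\mathbb F_2^n\}$, and for $n\ge m$, $\mu^*(n,m)=\min\{M(W,0): W\in A^*(n,m)\}$, $\nu^*(n,m)=\min\{M(W,c): W\in A^*(n,m),\ c\in\mathbb F_2^n\}$. *)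

(* Defs.v *)
From mathcomp Require Import all_boot all_order all_algebra.
Set Implicit Arguments. Unset Strict Implicit. Unset Printing Implicit Defensive.
Import GRing.Theory.
Local Open Scope ring_scope.

Definition hweight (n : nat) (u : 'cV['F_2]_n) : nat := #|[set i | u i 0 != 0]|.

Definition is_wiring (n : nat) (W : 'M['F_2]_n) : bool := [forall i, W i i == 1].

Definition vdeg (n : nat) (W : 'M['F_2]_n) (j : 'I_n) : nat := #|[set i | W i j != 0]|.

Definition wdeg (n : nat) (W : 'M['F_2]_n) : nat := \max_(j : 'I_n) vdeg W j.

Definition Mval (n : nat) (W : 'M['F_2]_n) (c : 'cV['F_2]_n) : nat :=
  \max_(x : 'cV['F_2]_n) hweight (W *m x + c).

Definition inA (n m : nat) (W : 'M['F_2]_n) : bool := is_wiring W && (wdeg W <= m)%N.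
Definition inAstar (n m : nat) (W : 'M['F_2]_n) : bool :=
  is_wiring W && [forall j, vdeg W j == m].

(* Minima over finite sets; the default value n is only reached when the set
   is empty, which never happens in the range where the functions are defined
   (n,m >= 1, and n >= m for the starred versions). *)
Definition mu (n m : nat) : nat :=
  \big[minn/n]_(W : 'M['F_2]_n | inA m W) Mval W 0.
Definition nu (n m : nat) : nat :=
  \big[minn/n]_(W : 'M['F_2]_n | inA m W) \big[minn/n]_(c : 'cV['F_2]_n) Mval W c.
Definition mustar (n m : nat) : nat :=
  \big[minn/n]_(W : 'M['F_2]_n | inAstar m W) Mval W 0.
Definition nustar (n m : nat) : nat :=
  \big[minn/n]_(W : 'M['F_2]_n | inAstar m W) \big[minn/n]_(c : 'cV['F_2]_n) Mval W c.

(* Main.v *)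
Require Import Defs.
From mathcomp Require Import all_boot all_order all_algebra.
Set Implicit Arguments. Unset Strict Implicit. Unset Printing Implicit Defensive.
Import GRing.Theory.

Lemma card_sum (T : finType) (P : pred T) : #|[set i | P i]| = (\sum_i (P i : nat))%N.
Proof. by rewrite -sum1_card big_mkcond; apply: eq_bigr => i _; rewrite inE; case: (P i). Qed.

Lemma hweight_col n1 n2 (a : 'cV['F_2]_n1) (b : 'cV['F_2]_n2) :
  hweight (col_mx a b) = (hweight a + hweight b)%N.
Proof.
rewrite /hweight !card_sum big_split_ord /=.
by congr (_ + _)%N; apply: eq_bigr => i _; rewrite ?col_mxEu ?col_mxEd.
Qed.

Lemma hweight_le n (u : 'cV['F_2]_n) : (hweight u <= n)%N.
Proof. by rewrite /hweight -[X in (_ <= X)%N]card_ord max_card. Qed.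

Lemma Mval_le n (W : 'M['F_2]_n) c : (Mval W c <= n)%N.
Proof. by apply/bigmax_leqP => x _; apply: hweight_le. Qed.

Definition bmx n1 n2 (W1 : 'M['F_2]_n1) (W2 : 'M['F_2]_n2) : 'M['F_2]_(n1 + n2) :=
  block_mx W1 0 0 W2.

Lemma Mval_block n1 n2 (W1 : 'M['F_2]_n1) (W2 : 'M['F_2]_n2) c1 c2 :
  (Mval (bmx W1 W2) (col_mx c1 c2) <= Mval W1 c1 + Mval W2 c2)%N.
Proof.
apply/bigmax_leqP => x _; rewrite -(vsubmxK x) /bmx mul_block_col !mul0mx addr0 add0r.
rewrite add_col_mx hweight_col leq_add //; exact: leq_bigmax.
Qed.

Lemma vdeg_l n1 n2 (W1 : 'M['F_2]_n1) (W2 : 'M['F_2]_n2) j :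
  vdeg (bmx W1 W2) (lshift n2 j) = vdeg W1 j.
Proof.
rewrite /vdeg !card_sum big_split_ord /= [X in (_ + X)%N]big1 ?addn0.
  by apply: eq_bigr => i _; rewrite block_mxEul.
by move=> i _; rewrite block_mxEdl mxE eqxx.
Qed.

Lemma vdeg_r n1 n2 (W1 : 'M['F_2]_n1) (W2 : 'M['F_2]_n2) j :
  vdeg (bmx W1 W2) (rshift n1 j) = vdeg W2 j.
Proof.
rewrite /vdeg !card_sum big_split_ord /= big1 ?add0n.
  by apply: eq_bigr => i _; rewrite block_mxEdr.
by move=> i _; rewrite block_mxEur mxE eqxx.
Qed.

Lemma wiring_b n1 n2 (W1 : 'M['F_2]_n1) (W2 : 'M['F_2]_n2) :
  is_wiring W1 -> is_wiring W2 -> is_wiring (bmx W1 W2).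
Proof.
move=> /forallP h1 /forallP h2; apply/forallP => i.
case: (split_ordP i) => k ->; by rewrite /bmx ?block_mxEul ?block_mxEdr.
Qed.

Lemma inA_b n1 n2 m (W1 : 'M['F_2]_n1) (W2 : 'M['F_2]_n2) :
  inA m W1 -> inA m W2 -> inA m (bmx W1 W2).
Proof.
move=> /andP[w1 d1] /andP[w2 d2]; rewrite /inA wiring_b //=.
apply/bigmax_leqP => j _; case: (split_ordP j) => k ->.
  by rewrite vdeg_l; apply: leq_trans d1; exact: leq_bigmax.
by rewrite vdeg_r; apply: leq_trans d2; exact: leq_bigmax.
Qed.

Lemma inAstar_b n1 n2 m (W1 : 'M['F_2]_n1) (W2 : 'M['F_2]_n2) :
  inAstar m W1 -> inAstar m W2 -> inAstar m (bmx W1 W2).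
Proof.
move=> /andP[w1 /forallP d1] /andP[w2 /forallP d2]; rewrite /inAstar wiring_b //=.
apply/forallP => j; case: (split_ordP j) => k ->; by rewrite ?vdeg_l ?vdeg_r.
Qed.

Lemma bigmin_wit (T : finType) (P : pred T) (F : T -> nat) d W0 :
  P W0 -> (forall W, P W -> (F W <= d)%N) ->
  exists W, P W /\ (F W <= \big[minn/d]_(W | P W) F W)%N.
Proof.
move=> p0 hd; apply: (big_ind (fun x => exists W, P W /\ (F W <= x)%N)).
- by exists W0; split => //; apply: hd.
- move=> x y [a [pa ha]] [b [pb hb]]; case: (leqP x y) => hxy.
    by exists a; split=> //; rewrite leq_min ha (leq_trans ha hxy).
  by exists b; split=> //; rewrite leq_min hb (leq_trans hb (ltnW hxy)).
- by move=> i pi; exists i.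
Qed.

Lemma bigmin_le (T : finType) (P : pred T) (F : T -> nat) d W :
  P W -> (\big[minn/d]_(W | P W) F W <= F W)%N.
Proof.
move=> pW; have : W \in index_enum T by rewrite mem_index_enum.
elim: (index_enum T) => // a r IH; rewrite inE big_cons => /orP[/eqP <-|/IH h].
  by rewrite pW geq_minl.
by case: (P a) => //; rewrite geq_min h orbT.
Qed.

Lemma bigmin_led (T : finType) (P : pred T) (F : T -> nat) d :
  (\big[minn/d]_(W | P W) F W <= d)%N.
Proof.
elim: (index_enum T) => [|a r IH]; rewrite ?big_nil ?big_cons //.
by case: (P a) => //; rewrite geq_min IH orbT.
Qed.

Section S2. Local Open Scope ring_scope.
Lemma inA_id n m : (0 < m)%N -> inA m (1%:M : 'M['F_2]_n).
Proof.
move=> m0; rewrite /inA; apply/andP; split.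
  by apply/forallP => i; rewrite mxE eqxx.
apply/bigmax_leqP => j _; rewrite /vdeg.
have -> : [set i | (1%:M : 'M['F_2]_n) i j != 0] = [set j].
  by apply/setP => i; rewrite !inE mxE; case: (i == j); rewrite ?oner_neq0 ?eqxx.
by rewrite cards1.
Qed.

Lemma sum_lt n m : (m <= n)%N -> (\sum_(k < n) ((k < m)%N : nat))%N = m.
Proof.
move=> hmn; rewrite -(big_mkord xpredT (fun k => ((k < m)%N : nat))).
rewrite (big_cat_nat (n:=m)) /=; [|done|done].
rewrite (eq_big_nat _ _ (F2 := fun _ => 1%N)); last by move=> i /andP[_ ->].
rewrite sum_nat_const_nat subn0 muln1 big_nat_cond big1 ?addn0 //.
by move=> i /andP[/andP[h _] _]; rewrite ltnNge h.
Qed.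

Definition circ n m : 'M['F_2]_n :=
  \matrix_(i, j) ((((i + n - j) %% n < m)%N : nat)%:R).

Lemma inAstar_circ n m : (0 < m)%N -> (m <= n)%N -> inAstar m (circ n m).
Proof.
move=> m0 hmn; have n0 : (0 < n)%N by apply: leq_trans hmn.
have E (b : bool) : (((b : nat)%:R : 'F_2) != 0) = b by case: b; rewrite ?oner_neq0 ?eqxx.
rewrite /inAstar; apply/andP; split.
  by apply/forallP => i; rewrite mxE addKn modnn m0.
apply/forallP => j; rewrite /vdeg card_sum.
under eq_bigr do rewrite mxE E.
pose f (i : 'I_n) : 'I_n := Ordinal (ltn_pmod (i + n - j) n0).
have finj : injective f.
  move=> a b /(congr1 val) /= /eqP.
  have hj : (j <= n)%N by apply: ltnW.
  rewrite -!addnBA // eqn_modDr !modn_small // => /eqP; exact: val_inj.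
apply/eqP; rewrite -[RHS](sum_lt hmn) [RHS](reindex_inj finj) /=.
by [].
Qed.
End S2.

Lemma mu_gen (Q : forall n, 'M['F_2]_n -> bool) n1 n2 W1 W2 :
  Q n1 W1 -> Q n2 W2 ->
  (forall A B, Q n1 A -> Q n2 B -> Q (n1 + n2)%N (bmx A B)) ->
  (\big[minn/(n1 + n2)%N]_(W : 'M['F_2]_((n1 + n2)) | Q _ W) Mval W 0 <=
   \big[minn/n1]_(W : 'M['F_2]_n1 | Q _ W) Mval W 0 + \big[minn/n2]_(W : 'M['F_2]_n2 | Q _ W) Mval W 0)%N.
Proof.
move=> q1 q2 hb.
have [A [pA lA]] := bigmin_wit (F := fun W => Mval W 0) (d := n1) q1 (fun W _ => Mval_le W 0).
have [B [pB lB]] := bigmin_wit (F := fun W => Mval W 0) (d := n2) q2 (fun W _ => Mval_le W 0).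
apply: leq_trans (bigmin_le (P := Q _) (fun W => Mval W 0) (n1 + n2)%N (hb _ _ pA pB)) _.
rewrite -col_mx0; apply: leq_trans (Mval_block _ _ _ _) _; exact: leq_add.
Qed.

Lemma nu_gen (Q : forall n, 'M['F_2]_n -> bool) n1 n2 W1 W2 :
  Q n1 W1 -> Q n2 W2 ->
  (forall A B, Q n1 A -> Q n2 B -> Q (n1 + n2)%N (bmx A B)) ->
  (\big[minn/(n1 + n2)%N]_(W : 'M['F_2]_((n1 + n2)) | Q _ W) \big[minn/(n1 + n2)%N]_(c : 'cV['F_2]_(n1 + n2)) Mval W c <=
   \big[minn/n1]_(W : 'M['F_2]_n1 | Q _ W) \big[minn/n1]_(c : 'cV['F_2]_n1) Mval W c
 + \big[minn/n2]_(W : 'M['F_2]_n2 | Q _ W) \big[minn/n2]_(c : 'cV['F_2]_n2) Mval W c)%N.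
Proof.
move=> q1 q2 hb.
have [A [pA lA]] := bigmin_wit (F := fun W => \big[minn/n1]_(c : 'cV['F_2]_n1) Mval W c) (d := n1) q1 (fun W _ => bigmin_led _ _ _).
have [B [pB lB]] := bigmin_wit (F := fun W => \big[minn/n2]_(c : 'cV['F_2]_n2) Mval W c) (d := n2) q2 (fun W _ => bigmin_led _ _ _).
have [c1 [_ l1]] := bigmin_wit (P := xpredT) (F := fun c => Mval A c) (d := n1) (W0 := 0%R) isT (fun c _ => Mval_le A c).
have [c2 [_ l2]] := bigmin_wit (P := xpredT) (F := fun c => Mval B c) (d := n2) (W0 := 0%R) isT (fun c _ => Mval_le B c).
apply: leq_trans (bigmin_le (P := Q _) (fun W => \big[minn/(n1 + n2)%N]_(c : 'cV['F_2]_(n1 + n2)) Mval W c) (n1 + n2)%N (hb _ _ pA pB)) _.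
apply: leq_trans (bigmin_le (P := xpredT) (fun c => Mval (bmx A B) c) (n1 + n2)%N (W := col_mx c1 c2) isT) _.
apply: leq_trans (Mval_block _ _ _ _) _; apply: leq_add.
  exact: leq_trans l1 lA.
exact: leq_trans l2 lB.
Qed.

Theorem corollary3p3 :
  (forall n1 n2 m : nat, (0 < n1)%N -> (0 < n2)%N -> (0 < m)%N ->
     (mu (n1 + n2) m <= mu n1 m + mu n2 m)%N) /\
  (forall n1 n2 m : nat, (0 < n1)%N -> (0 < n2)%N -> (0 < m)%N ->
     (nu (n1 + n2) m <= nu n1 m + nu n2 m)%N) /\
  (forall n1 n2 m : nat, (0 < n1)%N -> (0 < n2)%N -> (0 < m)%N ->
     (m <= n1)%N -> (m <= n2)%N ->
     (mustar (n1 + n2) m <= mustar n1 m + mustar n2 m)%N) /\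
  (forall n1 n2 m : nat, (0 < n1)%N -> (0 < n2)%N -> (0 < m)%N ->
     (m <= n1)%N -> (m <= n2)%N ->
     (nustar (n1 + n2) m <= nustar n1 m + nustar n2 m)%N).
Proof.
split; [|split; [|split]].
- move=> n1 n2 m _ _ hm; rewrite /mu.
  exact: (mu_gen (Q := fun n W => inA m W) (inA_id n1 hm) (inA_id n2 hm) (fun A B => @inA_b _ _ m A B)).
- move=> n1 n2 m _ _ hm; rewrite /nu.
  exact: (nu_gen (Q := fun n W => inA m W) (inA_id n1 hm) (inA_id n2 hm) (fun A B => @inA_b _ _ m A B)).
- move=> n1 n2 m _ _ hm h1 h2; rewrite /mustar.
  exact: (mu_gen (Q := fun n W => inAstar m W) (inAstar_circ hm h1) (inAstar_circ hm h2) (fun A B => @inAstar_b _ _ m A B)).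
- move=> n1 n2 m _ _ hm h1 h2; rewrite /nustar.
  exact: (nu_gen (Q := fun n W => inAstar m W) (inAstar_circ hm h1) (inAstar_circ hm h2) (fun A B => @inAstar_b _ _ m A B)).
Qed.
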